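(* Let $R$ be an integral domain of characteristic $0$ and let $\zeta,\zeta'$ be roots of unity in $R$. The following are equivalent: (1) $(q-\zeta)\Rightarrow_R(q-\zeta')$; (2) $R$ is $(\zeta-\zeta')$-adically separated, i.e. $\bigcap_{j\ge0}(\zeta-\zeta')^jR=(0)$; (3) the order of $\zeta^{-1}\zeta'$ is a power of some prime $p$ such that $R$ is $p$-adically separated, i.e. $\bigcap_{j\ge0}p^jR=(0)$.
   Context: $q$ is an indeterminate. For monic $f,g\in R[q]$ write $f\Rightarrow_R g$ if there exist an ideal $I\subset R$ with $\bigcap_{j\ge0}I^j=(0)$ and an integer $m\ge0$ with $f^m\in(g)+I[q]$. (A power $p^0=1$ counts as a power of $p$.) *)

(* Defs.v *)
From HB Require Import structures.
From mathcomp Require Import all_boot all_order all_algebra.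
Set Implicit Arguments. Unset Strict Implicit. Unset Printing Implicit Defensive.
Import Order.TTheory GRing.Theory Num.Theory.
Local Open Scope ring_scope.

Definition is_ideal (R : comNzRingType) (I : R -> Prop) : Prop :=
  [/\ I 0, (forall x y, I x -> I y -> I (x + y)) & (forall r x, I x -> I (r * x))].

Fixpoint ideal_pow (R : comNzRingType) (I : R -> Prop) (j : nat) : R -> Prop :=
  match j with
  | 0%N => fun _ => True
  | j'.+1 => fun x => exists s : seq (R * R),
      x = \sum_(ab <- s) ab.1 * ab.2 /\
      (forall ab, ab \in s -> ideal_pow I j' ab.1 /\ I ab.2)
  end.

Definition ideal_separated (R : comNzRingType) (I : R -> Prop) : Prop :=
  forall x, (forall j, ideal_pow I j x) -> x = 0.

Definition adically_separated (R : comNzRingType) (a : R) : Prop :=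
  forall x, (forall j : nat, exists y, x = a ^+ j * y) -> x = 0.

(* f =>_R g : exists an ideal I with intersection of the I^j = 0 and m >= 0
   with f^m in (g) + I[q]. *)
Definition poly_implies (R : comNzRingType) (f g : {poly R}) : Prop :=
  exists (I : R -> Prop) (m : nat), is_ideal I /\ ideal_separated I /\
    exists h : {poly R}, forall i : nat, I ((f ^+ m - g * h)`_i).

Definition is_root_of_unity_R (R : comNzRingType) (z : R) : Prop :=
  exists n : nat, (0 < n)%N /\ z ^+ n = 1.

(* Main.v *)
Require Import Defs.
From HB Require Import structures.
From mathcomp Require Import all_boot all_order all_algebra.
From mathcomp Require Import ring.
Import Order.TTheory GRing.Theory Num.Theory.
Set Implicit Arguments. Unset Strict Implicit.
Local Open Scope ring_scope.

Definition dv (R : comNzRingType) (a x : R) := exists c, x = a * c.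

Lemma dv0 (R : comNzRingType) (a : R) : dv a 0.
Proof. by exists 0; rewrite mulr0. Qed.
Lemma dvD (R : comNzRingType) (a x y : R) : dv a x -> dv a y -> dv a (x + y).
Proof. by move=> [c ->] [d ->]; exists (c + d); rewrite mulrDr. Qed.
Lemma dvN (R : comNzRingType) (a x : R) : dv a x -> dv a (- x).
Proof. by move=> [c ->]; exists (- c); rewrite mulrN. Qed.
Lemma dvM (R : comNzRingType) (a x y : R) : dv a x -> dv a (x * y).
Proof. by move=> [c ->]; exists (c * y); rewrite mulrA. Qed.
Lemma dv_sum (R : comNzRingType) (a : R) n (F : 'I_n -> R) :
  (forall i, dv a (F i)) -> dv a (\sum_(i < n) F i).
Proof.
move=> H; elim/big_ind: _ => //; [exact: dv0 | exact: dvD].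
Qed.

Lemma sep_trans (R : comNzRingType) (a b : R) N :
  dv a (b ^+ N) -> adically_separated a -> adically_separated b.
Proof.
move=> [c hc] sa x hx; apply: sa => j.
have [y ->] := hx (N * j)%N.
by exists (c ^+ j * y); rewrite exprM hc exprMn mulrA.
Qed.

Lemma one_sub_X (R : comNzRingType) (x : R) m :
  1 - x ^+ m = (1 - x) * \sum_(i < m) x ^+ i.
Proof.
by rewrite -opprB subrX1 -mulNr opprB.
Qed.

Lemma frob1 (R : comNzRingType) (p : nat) (x y : R) : prime p ->
  dv (p%:R : R) ((x + y) ^+ p - x ^+ p - y ^+ p).
Proof.
case: p => // p pp.
rewrite exprDn big_ord_recr /= big_ord_recl /= subnn bin0 binn subn0 !expr0 mulr1 mul1r !mulr1n.
have -> : forall a b c : R, (a + b + c) - a - c = b.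
  by move=> a b c; ring.
apply: dv_sum => i.
have : (p.+1 %| 'C(p.+1, bump 0 i))%N.
  by apply: prime_dvd_bin => //; rewrite /bump /= add1n ltnS ltn_ord.
move=> /dvdnP [e ->].
exists (x ^+ (p.+1 - bump 0 i) * y ^+ bump 0 i * e%:R).
rewrite -mulr_natr natrM. ring.
Qed.

Lemma frobk (R : comNzRingType) (p k : nat) (x y : R) : prime p ->
  dv (p%:R : R) ((x + y) ^+ (p ^ k) - x ^+ (p ^ k) - y ^+ (p ^ k)).
Proof.
move=> pp; elim: k => [|k [c hc]].
  by rewrite expn0 !expr1; exists 0; rewrite mulr0; ring.
set X := x ^+ (p ^ k); set Y := y ^+ (p ^ k).
have -> : (x + y) ^+ (p ^ k.+1) - x ^+ (p ^ k.+1) - y ^+ (p ^ k.+1)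
   = (((x + y) ^+ (p ^ k)) ^+ p - (X + Y) ^+ p) + ((X + Y) ^+ p - X ^+ p - Y ^+ p).
  have E : forall a b c d : R, a - b - c = (a - d) + (d - b - c) by move=> *; ring.
  by rewrite expnSr !exprM (E _ _ _ ((X + Y) ^+ p)).
apply: dvD; last exact: frob1.
have -> : (x + y) ^+ (p ^ k) = (X + Y) + p%:R * c.
  have E2 : forall u a b : R, u = a + b + (u - a - b) by move=> *; ring.
  by rewrite -hc; apply: E2.
rewrite subrXX; apply: dvM.
by exists c; ring.
Qed.

Lemma frob_root (R : comNzRingType) (p k : nat) (w : R) : prime p ->
  w ^+ (p ^ k) = 1 -> dv (p%:R : R) ((1 - w) ^+ (p ^ k)).
Proof.
move=> pp hw.
have h1 := frobk k 1 (- w) pp.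
have h2 := frobk k (1 : R) (- 1) pp.
rewrite addrN expr0n eqn0Ngt expn_gt0 (prime_gt0 pp) /= in h2.
rewrite exprNn hw mulr1 in h1.
have -> : (1 - w) ^+ (p ^ k) = ((1 - w) ^+ (p ^ k) - 1 ^+ (p ^ k) - (-1) ^+ (p ^ k))
    - (0 - 1 ^+ (p ^ k) - (-1) ^+ (p ^ k)).
  by move: ((1 - w) ^+ (p ^ k)) (1 ^+ (p ^ k) : R) ((-1) ^+ (p ^ k) : R) => a b c; ring.
by apply: dvD => //; apply: dvN.
Qed.

Lemma dv_one_sub (R : comNzRingType) (w : R) m : dv (1 - w) (1 - w ^+ m).
Proof. by rewrite one_sub_X; eexists. Qed.

Lemma prime_in_ideal (R : idomainType) (w : R) d q :
  d.-primitive_root w -> prime q -> (q %| d)%N -> dv (1 - w) (q%:R : R).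
Proof.
move=> pw pq qd.
have d_gt0 := prim_order_gt0 pw.
have q_gt1 := prime_gt1 pq.
set e := (d %/ q)%N.
have e_gt0 : (0 < e)%N by rewrite divn_gt0 ?prime_gt0 // dvdn_leq.
have e_lt : (e < d)%N by rewrite ltn_Pdiv.
pose eta := w ^+ e.
have eta1 : eta ^+ q = 1 by rewrite /eta -exprM divnK // prim_expr_order.
have etan1 : eta - 1 != 0.
  rewrite subr_eq0 /eta -(expr0 w) (eq_prim_root_expr pw) mod0n modn_small //.
  by rewrite -lt0n.
have S0 : \sum_(i < q) eta ^+ i = 0.
  have := subrX1 eta q; rewrite eta1 subrr => /esym /eqP.
  by rewrite mulf_eq0 (negbTE etan1) /= => /eqP.
have -> : (q%:R : R) = \sum_(i < q) (1 - eta ^+ i).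
  by rewrite sumrB S0 subr0 sumr_const card_ord.
apply: dv_sum => i; rewrite /eta -exprM; exact: dv_one_sub.
Qed.

Lemma two_primes_unit (R : comNzRingType) (a : R) p q :
  prime p -> prime q -> p != q -> dv a (p%:R) -> dv a (q%:R) -> dv a 1.
Proof.
move=> pp pq npq hp hq.
have cop : gcdn p q = 1%N.
  by apply/eqP; rewrite -/(coprime p q) prime_coprime // dvdn_prime2 // npq.
have [b _] := Bezoutl q (prime_gt0 pp).
rewrite cop => /dvdnP [c hc].
have E : (1 : R) = c%:R * p%:R - b%:R * q%:R.
  by rewrite -!natrM -hc natrD addrK.
rewrite E; apply: dvD; last apply: dvN.
  by rewrite mulrC; apply: dvM.
by rewrite mulrC; apply: dvM.
Qed.

Lemma pow_ideal_dv (R : comNzRingType) (d : R) j x :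
  ideal_pow (fun y => dv d y) j x -> dv (d ^+ j) x.
Proof.
elim: j x => [|j IH] x /=.
  by move=> _; exists x; rewrite expr0 mul1r.
move=> [s [-> H]]; elim: s H => [|ab s IHs] H.
  by rewrite big_nil; apply: dv0.
rewrite big_cons; apply: dvD; last by apply: IHs => cd hcd; apply: H; rewrite inE hcd orbT.
have [h1 [e he]] := H ab (mem_head _ _).
have [c hc] := IH _ h1.
by exists (c * e); rewrite hc he exprSr; ring.
Qed.

Lemma ideal_pow_c (R : comNzRingType) (I : R -> Prop) c :
  I c -> forall j y, ideal_pow I j (c ^+ j * y).
Proof.
move=> Ic; elim=> [|j IH] y //=.
exists [:: (c ^+ j * y, c)]; split.
  by rewrite big_seq1 /= exprSr; ring.
by move=> ab; rewrite inE => /eqP -> /=.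
Qed.

Lemma part1 (R : comNzRingType) (z z' : R) :
  poly_implies ('X - z%:P) ('X - z'%:P) <-> adically_separated (z - z').
Proof.
split.
  move=> [I [m [[I0 ID IM] [sep [h hh]]]]].
  set F := ('X - z%:P) ^+ m - ('X - z'%:P) * h in hh.
  have cI : I ((z' - z) ^+ m).
    have -> : (z' - z) ^+ m = F.[z'].
      by rewrite /F !hornerE subrr mul0r subr0.
    rewrite horner_coef; elim/big_ind: _ => //.
    by move=> i _; rewrite mulrC; apply: IM.
  move=> x hx; apply: sep => j.
  have [y ->] := hx (m * j)%N.
  have -> : (z - z') ^+ (m * j) * y = ((z' - z) ^+ m) ^+ j * (((-1) ^+ m) ^+ j * y).
    by rewrite exprM -opprB (exprNn (z' - z)) exprMn [RHS]mulrCA mulrA.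
  exact: ideal_pow_c.
move=> sep; exists (fun y => dv (z - z') y), 1%N; split.
  split; [exact: dv0 | exact: dvD | by move=> r x hx; rewrite mulrC; apply: dvM].
split.
  move=> x hx; apply: sep => j; have [c ->] := pow_ideal_dv (hx j).
  by exists c.
exists 1 => i.
have -> : ('X - z%:P) ^+ 1 - ('X - z'%:P) * 1 = (z' - z)%:P.
  by rewrite expr1 mulr1 polyCB; ring.
rewrite coefC; case: (i == 0%N); last exact: dv0.
by exists (-1); ring.
Qed.

Lemma sep0 (R : comNzRingType) : adically_separated (0 : R).
Proof. by move=> x hx; have [y ->] := hx 1%N; rewrite expr1 mul0r. Qed.

Unset Implicit Arguments.
Set Strict Implicit.

Theorem lemma5p1 (R : idomainType) (z z' : R) :
  [pchar R] =i pred0 ->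
  is_root_of_unity_R z -> is_root_of_unity_R z' ->
  (poly_implies ('X - z%:P) ('X - z'%:P) <-> adically_separated (z - z'))
  /\
  (adically_separated (z - z') <->
     (z = z' \/
      exists (p k : nat), [/\ prime p, (p ^ k)%N.-primitive_root (z^-1 * z')
                            & adically_separated (p%:R : R)])).
Proof.
move=> _ [n [n_gt0 hn]] [n' [n'_gt0 hn']].
split; first exact: part1.
have zu : z \is a GRing.unit by rewrite -(unitrX_pos _ n_gt0) hn unitr1.
set w := z^-1 * z'.
have Ez : z - z' = z * (1 - w) by rewrite mulrBr mulr1 /w mulrA mulrV // mul1r.
have sepE : adically_separated (z - z') <-> adically_separated (1 - w).
  split; apply: (@sep_trans _ _ _ 1%N).
    by exists z^-1; rewrite expr1 Ez [z * _]mulrC mulrK.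
  by exists z; rewrite expr1 Ez mulrC.
rewrite sepE.
have wn : w ^+ (n * n') = 1.
  rewrite /w exprMn exprVn exprM hn expr1n invr1 mul1r mulnC exprM hn' expr1n //.
have [d pw _] := prim_order_exists (n := (n * n')%N) (z := w) (ltac:(by rewrite muln_gt0 n_gt0)) wn.
split.
  move=> sepw.
  have [->|nzz] := eqVneq z z'; first by left.
  right.
  have w1 : w != 1.
    apply: contra nzz => /eqP w1; apply/eqP.
    by rewrite -(mulVKr zu z') -/w w1 mulr1.
  have d_gt0 := prim_order_gt0 pw.
  have d_gt1 : (1 < d)%N.
    rewrite ltn_neqAle d_gt0 andbT; apply: contra w1 => /eqP d1.
    by have := prim_expr_order pw; rewrite -d1 expr1 => ->.
  set p := pdiv d.
  have pp : prime p := pdiv_prime d_gt1.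
  have hp := prime_in_ideal pw pp (pdiv_dvd d).
  case: (boolP (has (fun q => q != p) (primes d))).
    move=> /hasP [q]; rewrite mem_primes => /and3P [pq _ qd] nqp.
    have npq : p != q by rewrite eq_sym.
    have [c hc] := two_primes_unit pp pq npq hp (prime_in_ideal pw pq qd).
    have : (1 : R) = 0.
      by apply: sepw => j; exists (c ^+ j); rewrite -exprMn -hc expr1n.
    by move/eqP; rewrite oner_eq0.
  move=> /hasPn hn1.
  have pd : p.-nat d.
    apply/pnatP => // r pr rd.
    have : r \in primes d by rewrite mem_primes pr d_gt0 rd.
    by move=> /hn1 /negPn.
  have [k dk] := p_natP pd.
  exists p, k; split => //; first by rewrite -dk.
  by apply: (@sep_trans _ _ _ 1%N) sepw; rewrite expr1.
move=> [ez|[p [k [pp pw' sepp]]]].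
  have -> : w = 1 by rewrite /w -ez mulVr.
  by rewrite subrr; apply: sep0.
apply: (sep_trans _ sepp).
exact: (frob_root pp (prim_expr_order pw')).
Qed.
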